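(* Let $i:M\to N$ be a normal monomorphism of algebraic lattices (identify $M$ with $i(M)$) and $L$ an algebraic sub-lattice of $M$ with maximal element $1_L$. Let $\pi:M\to M/L$ and $\pi':N\to N/L$ be the maps $x\mapsto x\vee 1_L$, where $M/L=\{x\in M:x\ge1_L\}$ and $N/L=\{x\in N:x\ge 1_L\}$. Then $\pi,\pi'$ are normal epimorphisms, the induced map $i':M/L\to N/L$, $x\mapsto i(x)$, is a normal monomorphism, and the square with top $i$, left $\pi$, right $\pi'$, bottom $i'$ is both a pullback and a pushout in the category $\mathcal{L}$ of algebraic lattices.
   Context: An element $x$ of a complete lattice is compact if every cover $x\le\bigvee_{i\in I}y_i$ has a finite subcover. An algebraic lattice is a complete lattice in which every element is a join of compact elements. Morphisms in $\mathcal{L}$ preserve arbitrary joins and send compact elements to compact elements. A morphism $f:L_1\to L_2$ is a normal monomorphism if injective with downward closed image, and a normal epimorphism if there is $x_0\in L_1$ and an isomorphism $\varphi:\{y\in L_1:y\ge x_0\}\to L_2$ with $f(y)=\varphi(y\vee x_0)$. An algebraic sub-lattice of $M$ is a subset which is itself an algebraic lattice such that the inclusion is a normal monomorphism. *)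

(* Defs.v *)
From Stdlib Require Import List.

Definition is_partial_order {T : Type} (le : T -> T -> Prop) : Prop :=
  (forall x, le x x) /\
  (forall x y z, le x y -> le y z -> le x z) /\
  (forall x y, le x y -> le y x -> x = y).

Definition is_lub {T : Type} (le : T -> T -> Prop) (A : T -> Prop) (s : T) : Prop :=
  (forall a, A a -> le a s) /\ (forall u, (forall a, A a -> le a u) -> le s u).

Definition is_complete_lattice {T : Type} (le : T -> T -> Prop) : Prop :=
  is_partial_order le /\ forall A : T -> Prop, exists s, is_lub le A s.

Definition compact {T : Type} (le : T -> T -> Prop) (x : T) : Prop :=
  forall (A : T -> Prop) (s : T), is_lub le A s -> le x s ->
    exists l : list T, (forall y, In y l -> A y) /\
      (forall s', is_lub le (fun y => In y l) s' -> le x s').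

Definition is_algebraic_lattice {T : Type} (le : T -> T -> Prop) : Prop :=
  is_complete_lattice le /\
  forall x, exists A : T -> Prop, (forall c, A c -> compact le c) /\ is_lub le A x.

Definition is_mor {T1 T2 : Type} (le1 : T1 -> T1 -> Prop) (le2 : T2 -> T2 -> Prop)
  (f : T1 -> T2) : Prop :=
  (forall (A : T1 -> Prop) s, is_lub le1 A s ->
     is_lub le2 (fun y => exists x, A x /\ y = f x) (f s)) /\
  (forall x, compact le1 x -> compact le2 (f x)).

Definition is_normal_mono {T1 T2 : Type} (le1 : T1 -> T1 -> Prop) (le2 : T2 -> T2 -> Prop)
  (f : T1 -> T2) : Prop :=
  is_mor le1 le2 f /\
  (forall x y, f x = f y -> x = y) /\
  (forall x y, le2 y (f x) -> exists z, f z = y).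

(* normal epimorphism: a morphism f for which there are x0 and an (order)
   isomorphism phi : {y | y >= x0} -> L2 with f y = phi (y \/ x0).
   phi is given as a function on T1 whose restriction to {y | le1 x0 y}
   is an order isomorphism onto T2. *)
Definition is_normal_epi {T1 T2 : Type} (le1 : T1 -> T1 -> Prop) (le2 : T2 -> T2 -> Prop)
  (f : T1 -> T2) : Prop :=
  is_mor le1 le2 f /\
  exists (x0 : T1) (phi : T1 -> T2),
    (forall y y', le1 x0 y -> le1 x0 y' -> (le1 y y' <-> le2 (phi y) (phi y'))) /\
    (forall z, exists y, le1 x0 y /\ phi y = z) /\
    (forall y j, is_lub le1 (fun a => a = y \/ a = x0) j -> f y = phi j).

Definition sub_le {T : Type} (le : T -> T -> Prop) (S : T -> Prop) :
  {x : T | S x} -> {x : T | S x} -> Prop :=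
  fun x y => le (proj1_sig x) (proj1_sig y).

Definition is_alg_sublattice {T : Type} (le : T -> T -> Prop) (S : T -> Prop) : Prop :=
  is_algebraic_lattice (sub_le le S) /\
  is_normal_mono (sub_le le S) le (@proj1_sig T S).

(* Commutative square in L
        A --ftop--> B
        |           |
      fleft      fright
        v           v
        C --fbot--> D                                                     *)

Definition is_pullback {A B C D : Type}
  (leA : A -> A -> Prop) (leB : B -> B -> Prop) (leC : C -> C -> Prop) (leD : D -> D -> Prop)
  (ftop : A -> B) (fleft : A -> C) (fright : B -> D) (fbot : C -> D) : Prop :=
  (forall x, fright (ftop x) = fbot (fleft x)) /\
  forall (P : Type) (leP : P -> P -> Prop), is_algebraic_lattice leP ->
  forall (a : P -> B) (b : P -> C), is_mor leP leB a -> is_mor leP leC b ->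
  (forall p, fright (a p) = fbot (b p)) ->
  exists u : P -> A, is_mor leP leA u /\
    (forall p, ftop (u p) = a p) /\ (forall p, fleft (u p) = b p) /\
    (forall v : P -> A, is_mor leP leA v ->
       (forall p, ftop (v p) = a p) -> (forall p, fleft (v p) = b p) ->
       forall p, v p = u p).

Definition is_pushout {A B C D : Type}
  (leA : A -> A -> Prop) (leB : B -> B -> Prop) (leC : C -> C -> Prop) (leD : D -> D -> Prop)
  (ftop : A -> B) (fleft : A -> C) (fright : B -> D) (fbot : C -> D) : Prop :=
  (forall x, fright (ftop x) = fbot (fleft x)) /\
  forall (Q : Type) (leQ : Q -> Q -> Prop), is_algebraic_lattice leQ ->
  forall (g : B -> Q) (h : C -> Q), is_mor leB leQ g -> is_mor leC leQ h ->
  (forall x, g (ftop x) = h (fleft x)) ->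
  exists u : D -> Q, is_mor leD leQ u /\
    (forall y, u (fright y) = g y) /\ (forall c, u (fbot c) = h c) /\
    (forall v : D -> Q, is_mor leD leQ v ->
       (forall y, v (fright y) = g y) -> (forall c, v (fbot c) = h c) ->
       forall d, v d = u d).

(* Main.v *)
Require Import Defs.
From Stdlib Require Import List ProofIrrelevance IndefiniteDescription.
Set Implicit Arguments.
From Stdlib Require Import List ProofIrrelevance IndefiniteDescription.
Set Implicit Arguments.

Lemma lub_unique T (le : T -> T -> Prop) (Hpo : is_partial_order le) A s s' :
  is_lub le A s -> is_lub le A s' -> s = s'.
Proof. intros [H1 H2] [H3 H4]. destruct Hpo as [_ [_ Ha]]. apply Ha; [apply H2|apply H4]; assumption. Qed.

Lemma lub_ext T (le : T -> T -> Prop) (A B : T -> Prop) s :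
  (forall x, A x <-> B x) -> is_lub le A s -> is_lub le B s.
Proof. intros HAB [H1 H2]; split; [intros a Ha; apply H1, HAB, Ha | intros u Hu; apply H2; intros a Ha; apply Hu, HAB, Ha]. Qed.

Lemma compact_ub T (le : T -> T -> Prop) (HC : is_complete_lattice le) x : compact le x ->
  forall A s, is_lub le A s -> le x s -> exists l, (forall y, In y l -> A y) /\
    forall u, (forall y, In y l -> le y u) -> le x u.
Proof. intros Hx A s Hs Hxs. destruct (Hx A s Hs Hxs) as [l [Hl1 Hl2]]. exists l; split; auto.
 intros u Hu. destruct HC as [[Hr [Ht _]] Hl]. destruct (Hl (fun y => In y l)) as [s' Hs'].
 apply Ht with s'; [apply Hl2, Hs' | apply (proj2 Hs'), Hu]. Qed.

Lemma compact_intro T (le : T -> T -> Prop) x : (forall A s, is_lub le A s -> le x s -> exists l,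
  (forall y, In y l -> A y) /\ forall u, (forall y, In y l -> le y u) -> le x u) -> compact le x.
Proof. intros H A s Hs Hxs. destruct (H A s Hs Hxs) as [l [H1 H2]]. exists l; split; auto.
  intros s' Hs'. apply H2, Hs'. Qed.

Lemma compact_list T (le : T -> T -> Prop) (HC : is_complete_lattice le) (l : list T) A t :
  (forall c, In c l -> compact le c /\ le c t) -> is_lub le A t ->
  exists L, (forall y, In y L -> A y) /\
    forall u, (forall y, In y L -> le y u) -> forall c, In c l -> le c u.
Proof.
  intros Hl Ht. induction l as [|c l IH].
  - exists nil. split; [intros y []| intros u _ c []].
  - destruct IH as [L1 [HL1 HL1']]. { intros d Hd; apply Hl; right; exact Hd. }
    destruct (Hl c (or_introl eq_refl)) as [Hc Hct].
    destruct (compact_ub HC Hc Ht Hct) as [L2 [HL2 HL2']].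
    exists (L2 ++ L1). split.
    + intros y Hy; apply in_app_or in Hy; destruct Hy; auto.
    + intros u Hu d [<-|Hd].
      * apply HL2'. intros y Hy; apply Hu, in_or_app; left; exact Hy.
      * apply HL1'; [intros y Hy; apply Hu, in_or_app; right; exact Hy | exact Hd].
Qed.

Lemma compact_of_list T (le : T -> T -> Prop) (HC : is_complete_lattice le) (l : list T) s :
  (forall c, In c l -> compact le c) -> is_lub le (fun y => In y l) s -> compact le s.
Proof.
  intros Hl Hs. apply compact_intro. intros A t Ht Hst.
  destruct HC as [[Hr [Htr Ha]] Hlub].
  destruct (@compact_list T le (conj (conj Hr (conj Htr Ha)) Hlub) l A t) as [L [HL1 HL2]]; auto.
  { intros c Hc; split; auto. apply Htr with s; auto. apply (proj1 Hs); auto. }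
  exists L; split; auto. intros u Hu. apply (proj2 Hs). intros c Hc. apply HL2; auto.
Qed.

Lemma compact_bot T (le : T -> T -> Prop) b : (forall q, le b q) -> compact le b.
Proof. intros Hb. apply compact_intro. intros A s _ _. exists nil. split; [intros y []|]. intros; apply Hb. Qed.

Lemma mor_mono T1 T2 (le1 : T1 -> T1 -> Prop) (le2 : T2 -> T2 -> Prop) f :
  is_partial_order le1 -> is_mor le1 le2 f -> forall x y, le1 x y -> le2 (f x) (f y).
Proof.
  intros [Hr [Ht Ha]] [Hf _] x y Hxy.
  assert (H : is_lub le1 (fun a => a = x \/ a = y) y).
  { split. intros a [->| ->]; auto. intros u Hu; apply Hu; auto. }
  apply (proj1 (Hf _ _ H)). exists x; auto.
Qed.

Lemma pair_image T1 T2 (le1 : T1 -> T1 -> Prop) (le2 : T2 -> T2 -> Prop) f x y s :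
  is_mor le1 le2 f -> is_lub le1 (fun a => a = x \/ a = y) s ->
  is_lub le2 (fun a => a = f x \/ a = f y) (f s).
Proof.
  intros [Hf _] Hs. apply (lub_ext (A := fun b => exists a, (a = x \/ a = y) /\ b = f a)); [|apply Hf, Hs].
  intros z; split.
  - intros [a [[->| ->] ->]]; auto.
  - intros [-> | ->]; eauto.
Qed.

Lemma nm_reflect T1 T2 (le1 : T1 -> T1 -> Prop) (le2 : T2 -> T2 -> Prop) f :
  is_complete_lattice le1 -> is_partial_order le2 -> is_normal_mono le1 le2 f ->
  forall x y, le2 (f x) (f y) -> le1 x y.
Proof.
  intros [[Hr [Ht Ha]] Hl] Hpo2 [Hm [Hinj _]] x y Hxy.
  destruct (Hl (fun a => a = x \/ a = y)) as [s Hs].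
  assert (Hfs := pair_image Hm Hs).
  assert (Hfy : is_lub le2 (fun a => a = f x \/ a = f y) (f y)).
  { destruct Hpo2 as [Hr2 _]. split. intros a [->| ->]; auto. intros u Hu; apply Hu; auto. }
  assert (E := lub_unique Hpo2 Hfs Hfy). apply Hinj in E. subst s.
  apply (proj1 Hs). auto.
Qed.

Lemma nm_reflect_lub T1 T2 (le1 : T1 -> T1 -> Prop) (le2 : T2 -> T2 -> Prop) f :
  is_complete_lattice le1 -> is_partial_order le2 -> is_normal_mono le1 le2 f ->
  forall X s, is_lub le2 (fun y => exists x, X x /\ y = f x) (f s) -> is_lub le1 X s.
Proof.
  intros H1 H2 H3 X s [Hs1 Hs2]. split.
  - intros a Ha. apply (nm_reflect H1 H2 H3). apply Hs1. eauto.
  - intros u Hu. apply (nm_reflect H1 H2 H3). apply Hs2. intros a [x [Hx ->]].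
    apply (mor_mono (proj1 H1) (proj1 H3)); auto.
Qed.

Lemma pull_list T1 T2 (f : T1 -> T2) (A : T1 -> Prop) (l : list T2) :
  (forall y, In y l -> exists x, A x /\ y = f x) ->
  exists l', (forall x, In x l' -> A x) /\ map f l' = l.
Proof.
  induction l as [|y l IH]; intros H.
  - exists nil; split; [intros x []|reflexivity].
  - destruct IH as [l' [H1 H2]]. { intros z Hz; apply H; right; auto. }
    destruct (H y (or_introl eq_refl)) as [x [Hx ->]].
    exists (x :: l'); split. intros z [<-|Hz]; auto. simpl; rewrite H2; reflexivity.
Qed.

Lemma nm_reflect_compact T1 T2 (le1 : T1 -> T1 -> Prop) (le2 : T2 -> T2 -> Prop) f :
  is_complete_lattice le1 -> is_partial_order le2 -> is_normal_mono le1 le2 f ->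
  forall m, compact le2 (f m) -> compact le1 m.
Proof.
  intros H1 H2 H3 m Hm. apply compact_intro. intros A s Hs Hms.
  assert (Hfs := proj1 (proj1 H3) A s Hs).
  assert (Hfm : le2 (f m) (f s)) by (apply (mor_mono (proj1 H1) (proj1 H3)); auto).
  destruct (Hm _ _ Hfs Hfm) as [l [Hl1 Hl2]].
  destruct (@pull_list _ _ f A l Hl1) as [l' [Hl'1 Hl'2]].
  exists l'; split; auto. intros u Hu.
  destruct (proj2 H1 (fun x => In x l')) as [s' Hs'].
  destruct H1 as [[Hr [Ht Ha]] Hl].
  apply Ht with s'; [|apply (proj2 Hs'); auto].
  apply (nm_reflect (conj (conj Hr (conj Ht Ha)) Hl) H2 H3). apply Hl2.
  subst l. apply (lub_ext (A := fun y => exists x, In x l' /\ y = f x)).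
  { intros y; rewrite in_map_iff; split; intros [x [? ?]]; eauto. }
  apply (proj1 (proj1 H3)); auto.
Qed.

Lemma sig_eq T (P : T -> Prop) (x y : {z | P z}) : proj1_sig x = proj1_sig y -> x = y.
Proof. destruct x as [x px], y as [y py]; simpl; intros ->; f_equal; apply proof_irrelevance. Qed.
Definition upS T (le : T -> T -> Prop) (e : T) (B : {x : T | le e x} -> Prop) : T -> Prop :=
  fun y => y = e \/ exists b, B b /\ y = proj1_sig b.

Lemma U1a T (le : T -> T -> Prop) e B s :
  is_lub (sub_le le (fun x => le e x)) B s -> is_lub le (upS le e B) (proj1_sig s).
Proof.
  intros [H1 H2]; split.
  - intros y [->|[b [Hb ->]]]; [exact (proj2_sig s)| apply H1; auto].
  - intros u Hu. assert (He : le e u) by (apply Hu; left; auto).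
    apply (H2 (exist _ u He)). intros b Hb. apply Hu. right; eauto.
Qed.

Lemma U1b T (le : T -> T -> Prop) e B s :
  is_lub le (upS le e B) (proj1_sig s) -> is_lub (sub_le le (fun x => le e x)) B s.
Proof.
  intros [H1 H2]; split.
  - intros b Hb. apply H1. right; eauto.
  - intros u Hu. apply H2. intros y [->|[b [Hb ->]]]; [exact (proj2_sig u) | apply Hu; auto].
Qed.

Lemma U_complete T (le : T -> T -> Prop) e :
  is_complete_lattice le -> is_complete_lattice (sub_le le (fun x => le e x)).
Proof.
  intros [[Hr [Ht Ha]] Hl]. split; [split; [|split]|].
  - intros x; apply Hr.
  - intros x y z; apply Ht.
  - intros x y H1 H2; apply sig_eq, Ha; auto.
  - intros B. destruct (Hl (upS le e B)) as [t Htl].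
    assert (He : le e t) by (apply (proj1 Htl); left; auto).
    exists (exist _ t He). apply U1b. exact Htl.
Qed.

Lemma conv_list T (le : T -> T -> Prop) e (B : {x : T | le e x} -> Prop) (L : list T) :
  (forall z, In z L -> upS le e B z) ->
  exists L', (forall b, In b L' -> B b) /\
    (forall z, In z L -> z = e \/ exists b, In b L' /\ z = proj1_sig b).
Proof.
  induction L as [|z L IH]; intros H.
  - exists nil; split; [intros b []|intros z []].
  - destruct IH as [L' [H1 H2]]. { intros y Hy; apply H; right; auto. }
    destruct (H z (or_introl eq_refl)) as [->|[b [Hb ->]]].
    + exists L'; split; auto. intros y [<-|Hy]; auto.
    + exists (b :: L'); split. intros b' [<-|Hb']; auto.
      intros y [<-|Hy]. right; exists b; split; [left|]; auto.
      destruct (H2 y Hy) as [->|[b' [Hb' ->]]]; auto. right; exists b'; split; [right|]; auto.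
Qed.

Lemma U_compact_a T (le : T -> T -> Prop) e (HC : is_complete_lattice le)
  (y : {x : T | le e x}) (l : list T) :
  (forall c, In c l -> compact le c) ->
  is_lub le (fun z => z = e \/ In z l) (proj1_sig y) ->
  compact (sub_le le (fun x => le e x)) y.
Proof.
  intros Hl Hy. apply compact_intro. intros B s Hs Hys.
  assert (HS := @U1a T le e B s Hs).
  assert (Ht := proj1 (proj2 (proj1 HC))).
  destruct (compact_list HC l (A := upS le e B) (t := proj1_sig s)) as [L [HL1 HL2]]; [|exact HS|].
  { intros c Hc; split; auto. apply Ht with (proj1_sig y); auto. apply (proj1 Hy); auto. }
  destruct (@conv_list T le e B L HL1) as [L' [H1 H2]].
  exists L'; split; auto. intros u Hu.
  unfold sub_le. apply (proj2 Hy). intros z [->|Hz]; [exact (proj2_sig u)|].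
  apply HL2; auto. intros w Hw. destruct (H2 w Hw) as [->|[b [Hb ->]]]; [exact (proj2_sig u)|].
  apply Hu; auto.
Qed.

Lemma U_lub_pairs T (le : T -> T -> Prop) e (HC : is_complete_lattice le)
  (y : {x : T | le e x}) (K K' : T -> Prop) :
  is_lub le K (proj1_sig y) -> (forall c, K c -> K' c) -> (forall c, K' c -> le c (proj1_sig y)) ->
  is_lub (sub_le le (fun x => le e x))
    (fun z => exists c, K' c /\ is_lub le (fun a => a = c \/ a = e) (proj1_sig z)) y.
Proof.
  intros HK HKK' HK'. destruct HC as [[Hr [Ht Ha]] Hl].
  apply U1b. split.
  - intros w [->|[b [[c [Hc Hb]] ->]]]; [exact (proj2_sig y)|].
    apply (proj2 Hb). intros a [->| ->]; auto. exact (proj2_sig y).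
  - intros u Hu. assert (He : le e u) by (apply Hu; left; auto).
    apply (proj2 HK). intros c Hc.
    destruct (Hl (fun a => a = c \/ a = e)) as [w Hw].
    assert (Hew : le e w) by (apply (proj1 Hw); auto).
    apply Ht with w. apply (proj1 Hw); auto.
    apply Hu. right. exists (exist _ w Hew). split; auto. exists c; split; auto.
Qed.

Lemma U_compact_b T (le : T -> T -> Prop) e (HA : is_algebraic_lattice le)
  (y : {x : T | le e x}) :
  compact (sub_le le (fun x => le e x)) y ->
  exists l, (forall c, In c l -> compact le c) /\ is_lub le (fun z => z = e \/ In z l) (proj1_sig y).
Proof.
  intros Hy. destruct HA as [HC Halg]. destruct (Halg (proj1_sig y)) as [K [HKc HK]].
  assert (HB := @U_lub_pairs T le e HC y K K HK (fun c h => h) (fun c h => proj1 HK c h)).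
  assert (HCU := U_complete e HC).
  destruct (compact_ub HCU Hy HB (proj1 (proj1 HCU) y)) as [L' [HL1 HL2]].
  assert (Hconv : exists l, (forall c, In c l -> K c) /\
     (forall b, In b L' -> exists c, In c l /\ is_lub le (fun a => a = c \/ a = e) (proj1_sig b))).
  { clear HL2. induction L' as [|b L' IH].
    - exists nil; split; [intros c []|intros b []].
    - destruct IH as [l [H1 H2]]. { intros b' Hb'; apply HL1; right; auto. }
      destruct (HL1 b (or_introl eq_refl)) as [c [Hc Hbc]].
      exists (c :: l); split. intros c' [<-|Hc']; auto.
      intros b' [<-|Hb']. exists c; split; [left|]; auto.
      destruct (H2 b' Hb') as [c' [Hc' H']]. exists c'; split; [right|]; auto. }
  destruct Hconv as [l [Hl1 Hl2]].
  exists l; split; [intros c Hc; apply HKc, Hl1, Hc|].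
  split.
  - intros z [->|Hz]; [exact (proj2_sig y)| apply (proj1 HK); auto].
  - intros u Hu. assert (He : le e u) by (apply Hu; left; auto).
    apply (HL2 (exist _ u He)). intros b Hb. destruct (Hl2 b Hb) as [c [Hc Hbc]].
    unfold sub_le; simpl. apply (proj2 Hbc). intros a [->| ->]; auto.
Qed.

Lemma U_algebraic T (le : T -> T -> Prop) e :
  is_algebraic_lattice le -> is_algebraic_lattice (sub_le le (fun x => le e x)).
Proof.
  intros [HC Halg]. split; [apply U_complete; auto|].
  intros y. destruct (Halg (proj1_sig y)) as [K [HKc HK]].
  eexists; split; [|apply (@U_lub_pairs T le e HC y K (fun c => compact le c /\ le c (proj1_sig y)) HK)].
  - intros z [c [[Hc _] Hz]]. apply (@U_compact_a T le e HC z (c :: nil)).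
    + intros c' [<-|[]]; auto.
    + apply (lub_ext (A := fun a => a = c \/ a = e)); auto.
      intros a; simpl; split; intros [H|H]; auto; destruct H as [H|[]]; auto.
  - intros c Hc; split; auto. apply (proj1 HK); auto.
  - intros c [_ Hc]; auto.
Qed.
Lemma p_fix T (le : T -> T -> Prop) e (Hpo : is_partial_order le) (p : T -> {x : T | le e x})
  (Hp : forall x, is_lub le (fun a => a = x \/ a = e) (proj1_sig (p x))) z :
  p (proj1_sig z) = z.
Proof.
  apply sig_eq. apply (lub_unique Hpo (Hp _)). split.
  - intros a [->| ->]; [apply (proj1 Hpo)| exact (proj2_sig z)].
  - intros u Hu; apply Hu; auto.
Qed.

Lemma p_mor T (le : T -> T -> Prop) e (HC : is_complete_lattice le) (p : T -> {x : T | le e x})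
  (Hp : forall x, is_lub le (fun a => a = x \/ a = e) (proj1_sig (p x))) :
  is_mor le (sub_le le (fun x => le e x)) p.
Proof.
  destruct (proj1 HC) as [Hr [Ht Ha]]. split.
  - intros A s Hs. apply U1b. split.
    + intros y [->|[b [[a [Ha' ->]] ->]]]; [apply (proj1 (Hp s)); auto|].
      apply (proj2 (Hp a)). intros w [->| ->]; [|apply (proj1 (Hp s)); auto].
      apply Ht with s; [apply (proj1 Hs); auto| apply (proj1 (Hp s)); auto].
    + intros u Hu. assert (He : le e u) by (apply Hu; left; auto).
      apply (proj2 (Hp s)). intros w [->| ->]; auto.
      apply (proj2 Hs). intros a Ha'. apply Ht with (proj1_sig (p a)); [apply (proj1 (Hp a)); auto|].
      apply Hu. right. exists (p a); split; eauto.
  - intros x Hx. apply (@U_compact_a T le e HC (p x) (x :: nil)).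
    + intros c [<-|[]]; auto.
    + apply (lub_ext (A := fun a => a = x \/ a = e)); [|apply Hp].
      intros a; simpl; split; intros [H|H]; auto; destruct H as [H|[]]; auto.
Qed.

Lemma p_epi T (le : T -> T -> Prop) e (HC : is_complete_lattice le) (p : T -> {x : T | le e x})
  (Hp : forall x, is_lub le (fun a => a = x \/ a = e) (proj1_sig (p x))) :
  is_normal_epi le (sub_le le (fun x => le e x)) p.
Proof.
  assert (Hpo := proj1 HC).
  assert (Hfix : forall z, p (proj1_sig z) = z) by (apply (@p_fix T le e Hpo p Hp)).
  assert (Hid : forall x, le e x -> proj1_sig (p x) = x) by
    (intros x hx; exact (f_equal (@proj1_sig _ _) (Hfix (exist _ x hx)))).
  split; [apply p_mor; auto|]. exists e, p. split; [|split].
  - intros y y' Hy Hy'. unfold sub_le. rewrite (Hid y Hy), (Hid y' Hy'). tauto.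
  - intros z. exists (proj1_sig z); split; [exact (proj2_sig z)| apply Hfix].
  - intros y j Hj. apply sig_eq.
    assert (Hej : le e j) by (apply (proj1 Hj); auto).
    rewrite (Hid j Hej).
    apply (lub_unique Hpo (Hp y)). apply (lub_ext (A := fun a => a = y \/ a = e)); [tauto|exact Hj].
Qed.

Theorem mainTheorem18
  (M N : Type) (leM : M -> M -> Prop) (leN : N -> N -> Prop)
  (HM : is_algebraic_lattice leM) (HN : is_algebraic_lattice leN)
  (i : M -> N) (Hi : is_normal_mono leM leN i)
  (L : M -> Prop) (HL : is_alg_sublattice leM L)
  (oneL : M) (HoneL : L oneL /\ forall x, L x -> leM x oneL)
  (pi : M -> {x : M | leM oneL x})
  (Hpi : forall x, is_lub leM (fun a => a = x \/ a = oneL) (proj1_sig (pi x)))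
  (pi' : N -> {y : N | leN (i oneL) y})
  (Hpi' : forall y, is_lub leN (fun b => b = y \/ b = i oneL) (proj1_sig (pi' y)))
  (i' : {x : M | leM oneL x} -> {y : N | leN (i oneL) y})
  (Hi' : forall x, proj1_sig (i' x) = i (proj1_sig x)) :
  is_algebraic_lattice (sub_le leM (fun x => leM oneL x)) /\
  is_algebraic_lattice (sub_le leN (fun y => leN (i oneL) y)) /\
  is_normal_epi leM (sub_le leM (fun x => leM oneL x)) pi /\
  is_normal_epi leN (sub_le leN (fun y => leN (i oneL) y)) pi' /\
  is_normal_mono (sub_le leM (fun x => leM oneL x)) (sub_le leN (fun y => leN (i oneL) y)) i' /\
  is_pullback leM leN (sub_le leM (fun x => leM oneL x)) (sub_le leN (fun y => leN (i oneL) y))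
    i pi pi' i' /\
  is_pushout leM leN (sub_le leM (fun x => leM oneL x)) (sub_le leN (fun y => leN (i oneL) y))
    i pi pi' i'.
Proof.
  assert (HpoM := proj1 (proj1 HM)). assert (HpoN := proj1 (proj1 HN)).
  assert (Hmi := proj1 Hi).
  assert (Hrefl : forall x y, leN (i x) (i y) -> leM x y) by apply (nm_reflect (proj1 HM) HpoN Hi).
  assert (Hfix : forall z, pi (proj1_sig z) = z) by apply (@p_fix M leM oneL HpoM pi Hpi).
  assert (Hfix' : forall z, pi' (proj1_sig z) = z) by apply (@p_fix N leN (i oneL) HpoN pi' Hpi').
  assert (Hid : forall x, leM oneL x -> proj1_sig (pi x) = x) by
    (intros x hx; exact (f_equal (@proj1_sig _ _) (Hfix (exist _ x hx)))).
  assert (Hsq : forall x, pi' (i x) = i' (pi x)).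
  { intros x. apply sig_eq. rewrite Hi'. apply (lub_unique HpoN (Hpi' (i x))).
    apply (pair_image Hmi (Hpi x)). }
  split; [apply U_algebraic; auto|].
  split; [apply U_algebraic; auto|].
  split; [apply p_epi; [exact (proj1 HM)|exact Hpi]|].
  split; [apply p_epi; [exact (proj1 HN)|exact Hpi']|].
  split; [|split].
  -
    split; [split|split].
    + intros B s Hs. apply U1b. rewrite Hi'.
      assert (H1 := @U1a M leM oneL B s Hs). assert (H2 := proj1 Hmi _ _ H1).
      apply (lub_ext (A := fun y => exists x, upS leM oneL B x /\ y = i x)); [|exact H2].
      intros y; unfold upS; split.
      * intros [x [[->|[b [Hb ->]]] ->]]; [left; auto|right].
        exists (i' b); split; [exists b; auto| symmetry; apply Hi'].
      * intros [->|[b' [[b [Hb ->]] ->]]]; [exists oneL; auto|].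
        exists (proj1_sig b); split; [right; eauto| apply Hi'].
    + intros x Hx. destruct (@U_compact_b M leM oneL HM x Hx) as [l [Hl Hlub]].
      apply (@U_compact_a N leN (i oneL) (proj1 HN) (i' x) (map i l)).
      * intros c Hc. apply in_map_iff in Hc. destruct Hc as [m [<- Hm]]. apply (proj2 Hmi); auto.
      * rewrite Hi'. apply (lub_ext (A := fun y => exists x, (x = oneL \/ In x l) /\ y = i x));
          [|apply (proj1 Hmi); auto].
        intros y; rewrite in_map_iff; split.
        -- intros [m [[->|Hm] ->]]; [left|right]; eauto.
        -- intros [->|[m [<- Hm]]]; eauto.
    + intros x y E. apply sig_eq. apply (proj1 (proj2 Hi)). rewrite <- !Hi'. rewrite E. reflexivity.
    + intros x y Hy. unfold sub_le in Hy. rewrite Hi' in Hy.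
      destruct (proj2 (proj2 Hi) _ _ Hy) as [z Hz].
      assert (Hez : leM oneL z) by (apply Hrefl; rewrite Hz; exact (proj2_sig y)).
      exists (exist _ z Hez). apply sig_eq. rewrite Hi'. exact Hz.
  -
    split; [exact Hsq|]. intros P leP HP a b Ha Hb Hab.
    assert (Hex : forall p, exists z, i z = a p).
    { intros p. apply (proj2 (proj2 Hi)) with (proj1_sig (b p)).
      rewrite <- Hi', <- Hab. apply (proj1 (Hpi' (a p))). left; reflexivity. }
    set (u := fun p => proj1_sig (constructive_indefinite_description _ (Hex p))).
    assert (Hu : forall p, i (u p) = a p) by
      (intros p; exact (proj2_sig (constructive_indefinite_description _ (Hex p)))).
    clearbody u.
    exists u. split; [|split; [|split]].
    + split.
      * intros A s Hs. apply (nm_reflect_lub (proj1 HM) HpoN Hi). rewrite Hu.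
        apply (lub_ext (A := fun y => exists x, A x /\ y = a x)); [|apply (proj1 Ha); auto].
        intros y; split.
        -- intros [q [Hq ->]]. exists (u q); split; [eauto| apply eq_sym, Hu].
        -- intros [x [[q [Hq ->]] ->]]. exists q; split; auto.
      * intros p Hp. apply (nm_reflect_compact (proj1 HM) HpoN Hi). rewrite Hu. apply (proj2 Ha); auto.
    + exact Hu.
    + intros p. apply sig_eq. apply (proj1 (proj2 Hi)).
      transitivity (proj1_sig (i' (b p))); [|apply Hi'].
      rewrite <- Hab. apply (lub_unique HpoN (pair_image Hmi (Hpi (u p)))). rewrite Hu. apply Hpi'.
    + intros v Hv Hva Hvb p. apply (proj1 (proj2 Hi)). rewrite Hva, Hu. reflexivity.
  -
    split; [exact Hsq|]. intros Q leQ HQ g h Hg Hh Hgh.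
    assert (HpoQ := proj1 (proj1 HQ)).
    assert (Hbot : forall q, leQ (g (i oneL)) q).
    { rewrite Hgh.
      assert (Hb : is_lub (sub_le leM (fun x => leM oneL x)) (fun _ => False) (pi oneL)).
      { split; [intros _ []|]. intros w _. unfold sub_le. rewrite (Hid oneL (proj1 HpoM oneL)).
        exact (proj2_sig w). }
      assert (Hh' := proj1 Hh _ _ Hb). intros q. apply (proj2 Hh'). intros y [x [[] _]]. }
    exists (fun y => g (proj1_sig y)). split; [|split; [|split]].
    + split.
      * intros B s Hs. assert (H1 := @U1a N leN (i oneL) B s Hs). assert (H2 := proj1 Hg _ _ H1).
        split.
        -- intros y [x [Hx ->]]. apply (proj1 H2). exists (proj1_sig x). split; auto. right; eauto.
        -- intros w Hw. apply (proj2 H2). intros y [x [[->|[b [Hb ->]]] ->]]; [apply Hbot|].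
           apply Hw. eauto.
      * intros y Hy. destruct (@U_compact_b N leN (i oneL) HN y Hy) as [l [Hl Hlub]].
        apply (@compact_of_list Q leQ (proj1 HQ) (g (i oneL) :: map g l)).
        -- intros c [<-|Hc]; [apply compact_bot, Hbot|].
           apply in_map_iff in Hc. destruct Hc as [m [<- Hm]]. apply (proj2 Hg); auto.
        -- apply (lub_ext (A := fun y => exists x, (x = i oneL \/ In x l) /\ y = g x));
             [|apply (proj1 Hg); auto].
           intros z; simpl; rewrite in_map_iff; split.
           ++ intros [m [[->|Hm] ->]]; [left|right]; eauto.
           ++ intros [<-|[m [<- Hm]]]; eauto.
    + intros y. simpl. apply (lub_unique HpoQ (pair_image Hg (Hpi' y))). split.
      * intros q [->| ->]; [apply (proj1 HpoQ)| apply Hbot].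
      * intros w Hw; apply Hw; auto.
    + intros c. simpl. rewrite Hi', Hgh, Hfix. reflexivity.
    + intros v Hv Hvg Hvh d. transitivity (v (pi' (proj1_sig d))); [rewrite Hfix'; reflexivity| apply Hvg].
Qed.
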